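(* In the setting described in the context, $$\mathbb{E}[V]=\mathbb{E}\left[v(I\setminus S_{\varepsilon^{-1}})\right]\ \ge\ \left(\varepsilon-\varepsilon^{3/2}\right)\cdot\sum_{j=1}^{\varepsilon^{-1}-\varepsilon^{-1/2}}\frac{\mathbb{E}[v(x^j)]}{1-(j-1)\varepsilon}.$$
   Context: A CMK instance is $\mathcal{I}=(I,w,v,m,k)$ with $I$ a finite item set, $w:I\to[0,1]$, $v:I\to\mathbb{R}_{\ge0}$, $m,k\in\mathbb{N}_{>0}$. A configuration is $C\subseteq I$ with $|C|\le k$ and $\sum_{i\in C}w(i)\le1$; $\mathcal{C}$ is the set of configurations and $\mathcal{C}(i)=\{C\in\mathcal{C}:i\in C\}$. A solution is a tuple of $m$ configurations, with value $v$ of their union; $\mathrm{OPT}(\mathcal{I})$ is the maximum value. A fractional solution is $x\in\mathbb{R}_{\ge0}^{\mathcal{C}}$, with $\mathrm{cover}_i(x)=\sum_{C\in\mathcal{C}(i)}x_C$, $\|x\|=\sum_Cx_C$; it is feasible if $\mathrm{cover}(x)\in[0,1]^I$; for $y\in\mathbb{R}^I$, $v(y)=\sum_iy_iv(i)$, and $v(x)=v(\mathrm{cover}(x))$. For $S\subseteq I$ and $\ell\in\mathbb{N}$, $\mathrm{LP}(S,\ell)$ is: maximize $v(x)$ over feasible fractional solutions $x$ with $x_C=0$ whenever $C\not\subseteq S$, and $\|x\|=\ell$. For $\|x\|\ne0$, a random configuration $R$ is distributed by $x$ ($R\sim x$) if $\Pr(R=C)=x_C/\|x\|$. Given $\varepsilon\in(0,0.1)$,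 $\mathcal{I}$ is $\varepsilon$-simple if $m>\exp(\exp(\varepsilon^{-30}))$ and $\varepsilon m\in\mathbb{N}$. Iterative randomized rounding: let $\varepsilon\in(0,0.1)$ with $\varepsilon^{-1/2}\in\mathbb{N}$ and $\mathcal{I}$ be $\varepsilon$-simple; let $q=\varepsilon m$ and $S_0=I$. For $j=1,\dots,\varepsilon^{-1}$: let $m_j=m(1-(j-1)\varepsilon)$; let $x^j$ be a $(1-\varepsilon)$-approximate solution of $\mathrm{LP}(S_{j-1},m_j)$ (a feasible solution of value at least $(1-\varepsilon)$ times its optimum), determined by the outcomes of the samples of previous iterations; sample independently $R^j_1,\dots,R^j_q\sim x^j$; set $S_j=S_{j-1}\setminus\bigcup_{b=1}^qR^j_b$. The output value is $V=v(I\setminus S_{\varepsilon^{-1}})$, where $v(T)=\sum_{i\in T}v(i)$. *)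

(* Defs.v *)
From HB Require Import structures.
From mathcomp Require Import all_boot all_order all_algebra.
From mathcomp Require Import reals sequences exp.
Set Implicit Arguments. Unset Strict Implicit. Unset Printing Implicit Defensive.
Import Order.TTheory GRing.Theory Num.Theory.
Local Open Scope ring_scope.

Section CMK.
Variables (R : realType) (I : finType) (w v : I -> R) (k : nat).

Definition is_config (C : {set I}) : bool :=
  (#|C| <= k)%N && (\sum_(i in C) w i <= 1).

(* a fractional solution is a function on {set I} that vanishes outside
   configurations (i.e. an element of R_{>=0}^{configurations}) *)
Definition cover (x : {set I} -> R) (i : I) : R :=
  \sum_(C : {set I} | is_config C && (i \in C)) x C.
Definition xnorm (x : {set I} -> R) : R := \sum_(C : {set I} | is_config C) x C.
Definition vvec (y : I -> R) : R := \sum_i y i * v i.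
Definition vfrac (x : {set I} -> R) : R := vvec (cover x).
Definition vset (T : {set I}) : R := \sum_(i in T) v i.

Definition frac_solution (x : {set I} -> R) : Prop :=
  (forall C : {set I}, 0 <= x C) /\ (forall C : {set I}, ~~ is_config C -> x C = 0).

Definition LP_feasible (S : {set I}) (l : R) (x : {set I} -> R) : Prop :=
  frac_solution x /\ (forall i, 0 <= cover x i <= 1) /\
  (forall C : {set I}, ~~ (C \subset S) -> x C = 0) /\ xnorm x = l.

(* (1-eps)-approximate solution of LP(S, l): feasible, and value at least
   (1-eps) times the value of every feasible solution (= (1-eps) * optimum) *)
Definition approx_LP (eps : R) (S : {set I}) (l : R) (x : {set I} -> R) : Prop :=
  LP_feasible S l x /\ (forall y, LP_feasible S l y -> (1 - eps) * vfrac y <= vfrac x).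

(* Histories of the rounding process with N iterations of q samples each:
   h i b = R^{i+1}_{b+1}. *)
Definition history (N q : nat) := {ffun 'I_N -> {ffun 'I_q -> {set I}}}.

(* S_j = I minus all configurations sampled in iterations 1..j *)
Definition Sj (N q : nat) (h : history N q) (j : nat) : {set I} :=
  ~: \bigcup_(i : 'I_N | (i < j)%N) \bigcup_(b : 'I_q) h i b.

(* probability of a full history under the adaptive policy pol, where
   pol j h is the fractional solution x^j used in iteration j (1-based) *)
Definition hist_prob (N q : nat) (pol : nat -> history N q -> {set I} -> R)
    (h : history N q) : R :=
  \prod_(i : 'I_N) \prod_(b : 'I_q) (pol i.+1 h (h i b) / xnorm (pol i.+1 h)).

Definition Exp (N q : nat) (pol : nat -> history N q -> {set I} -> R)
    (X : history N q -> R) : R :=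
  \sum_(h : history N q) hist_prob pol h * X h.

End CMK.

(* Main.v *)
Require Import Defs.
From HB Require Import structures.
From mathcomp Require Import all_boot all_order all_algebra.
From mathcomp Require Import reals sequences exp.
From mathcomp Require Import ring lra.
Import Order.TTheory GRing.Theory Num.Theory.
Local Open Scope ring_scope.

Module Aux.
Set Implicit Arguments. Unset Strict Implicit. Unset Printing Implicit Defensive.

Section Marg.
Variables (R : realType) (A : finType) (n : nat) (a0 : A).
Local Notation T := {ffun 'I_n -> A}.
Variable p : 'I_n -> T -> A -> R.
Hypothesis p_dep : forall (i : 'I_n) (h h' : T),
  (forall i' : 'I_n, (i' < i)%N -> h i' = h' i') -> p i h = p i h'.
Hypothesis p_sum1 : forall i h, \sum_a p i h a = 1.

Definition upd (h : T) (t : 'I_n) (a : A) : T :=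
  [ffun i => if i == t then a else h i].
Definition Dp (t : nat) (h : T) : bool :=
  [forall i : 'I_n, (t <= i)%N ==> (h i == a0)].
Definition Pl (t : nat) (h : T) : R := \prod_(i : 'I_n | (i < t)%N) p i h (h i).
Definition depl (t : nat) (F : T -> R) :=
  forall h h' : T, (forall i : 'I_n, (i < t)%N -> h i = h' i) -> F h = F h'.

Lemma upd_eq h t a : upd h t a t = a.
Proof. by rewrite ffunE eqxx. Qed.
Lemma upd_neq h t a i : i != t -> upd h t a i = h i.
Proof. by rewrite ffunE => /negbTE ->. Qed.

Lemma reindexD (t : 'I_n) (G : T -> R) :
  \sum_(h | Dp t.+1 h) G h = \sum_(h | Dp t h) \sum_a G (upd h t a).
Proof.
rewrite (partition_big (fun h : T => h t) predT) //=.
rewrite [RHS]exchange_big /=; apply: eq_bigr => a _.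
rewrite (reindex_onto (fun g => upd g t a) (fun h => upd h t a0)).
  apply: eq_bigl => g /=; rewrite /Dp.
  apply/idP/idP.
    case/andP=> /andP[D0 _] /eqP E; have D := forallP D0; apply/forallP => i; apply/implyP => ti.
    have := congr1 (fun f : T => f i) E; rewrite /= [upd _ t a0 i]ffunE.
    case: eqP => [-> <-|ne <-]; first by [].
    have ti1 : (t.+1 <= i)%N.
      by rewrite ltn_neqAle ti andbT; apply/eqP => /val_inj/esym.
    exact: (implyP (D i) ti1).
  move/forallP=> D; apply/andP; split; first (apply/andP; split; last by rewrite upd_eq).
    apply/forallP => i; apply/implyP => ti.
    rewrite upd_neq; last by apply/eqP => E; move: ti; rewrite E ltnn.
    exact: (implyP (D i) (ltnW ti)).
  apply/eqP/ffunP => i; rewrite !ffunE; case: eqP => // ->.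
  by apply/esym/eqP; exact: (implyP (D t) (leqnn t)).
move=> h /andP[_ /eqP E]; apply/ffunP => i; rewrite !ffunE.
by case: eqP => // ->; rewrite ?eqxx.
Qed.

Lemma Pl_succ (o : 'I_n) g : Pl o.+1 g = Pl o g * p o g (g o).
Proof.
rewrite /Pl (bigD1 o) //= mulrC; congr (_ * _); apply: eq_bigl => i.
by rewrite ltnS ltn_neqAle andbC; congr (_ && _).
Qed.

Lemma Pl_upd (t : nat) (o : 'I_n) h a : (t <= o)%N -> Pl t (upd h o a) = Pl t h.
Proof.
move=> to; apply: eq_bigr => i it.
have io : i != o by apply/eqP => E; move: it; rewrite E ltnNge to.
rewrite upd_neq // (p_dep (h' := h)) // => i' i'i; apply: upd_neq.
apply/eqP => E; move: (ltn_trans i'i it); by rewrite E ltnNge to.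
Qed.

Lemma Dp_all h : Dp n h.
Proof. by apply/forallP => i; apply/implyP; rewrite leqNgt ltn_ord. Qed.

Lemma marg_aux d : forall t, n = (t + d)%N -> forall F, depl t F ->
  \sum_h Pl n h * F h = \sum_(h | Dp t h) Pl t h * F h.
Proof.
elim: d => [|d IH] t Hn F dF.
  rewrite addn0 in Hn; subst t; by apply: eq_bigl => h; rewrite Dp_all.
have tn : (t < n)%N by rewrite Hn addnS ltnS leq_addr.
rewrite (IH t.+1); last 2 first.
- by rewrite Hn addnS addSn.
- by move=> h h' E; apply: dF => i it; apply: E; exact: ltnW.
pose o := Ordinal tn.
have -> : t = nat_of_ord o by [].
rewrite reindexD; apply: eq_bigr => h _.
transitivity (\sum_a Pl o h * F h * p o h a).
  apply: eq_bigr => a _; rewrite Pl_succ Pl_upd // upd_eq.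
  rewrite (p_dep (h' := h)); last by move=> i' i'o; apply: upd_neq; apply/eqP => E; move: i'o; rewrite E ltnn.
  rewrite (dF _ h); first by rewrite mulrAC.
  by move=> i io; apply: upd_neq; apply/eqP => E; move: io; rewrite E ltnn.
by rewrite -mulr_sumr p_sum1 mulr1.
Qed.

Lemma marg (t : nat) F : (t <= n)%N -> depl t F ->
  \sum_h Pl n h * F h = \sum_(h | Dp t h) Pl t h * F h.
Proof. by move=> tn; apply: (marg_aux (d := n - t)); rewrite subnKC. Qed.

Lemma marg1 (o : 'I_n) F : depl o.+1 F ->
  \sum_h Pl n h * F h = \sum_(h | Dp o h) Pl o h * \sum_a p o h a * F (upd h o a).
Proof.
move=> dF; rewrite (marg (t := o.+1)) // reindexD; apply: eq_bigr => h _.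
rewrite mulr_sumr; apply: eq_bigr => a _.
rewrite Pl_succ Pl_upd // upd_eq mulrA (p_dep (h' := h)) //.
by move=> i' i'o; apply: upd_neq; apply/eqP => E; move: i'o; rewrite E ltnn.
Qed.
End Marg.


Lemma bern2 (R : realType) (y : R) n : 0 <= y <= 1 ->
  (1 - y) ^+ n <= 1 - n%:R * y + (n%:R) ^+ 2 * y ^+ 2 / 2%:R.
Proof.
case/andP=> y0 y1; elim: n => [|n IH]; first by rewrite expr0 mul0r !subr0 expr0n /= mul0r mul0r addr0.
rewrite exprS.
apply: le_trans (_ : (1 - y) * (1 - n%:R * y + n%:R ^+ 2 * y ^+ 2 / 2%:R) <= _).
  by apply: ler_wpM2l => //; rewrite subr_ge0.
have n0 : 0 <= n%:R :> R by [].
rewrite (_ : n.+1%:R = n%:R + 1 :> R); last by rewrite natr1.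
rewrite !expr2 -subr_ge0.
set N := n%:R.
have -> : 1 - (N + 1) * y + (N + 1) * (N + 1) * (y * y) / 2%:R -
  (1 - y) * (1 - N * y + N * N * (y * y) / 2%:R) = (y * y + N * N * (y * y * y)) / 2%:R by field.
by rewrite divr_ge0 // addr_ge0 // ?mulr_ge0.
Qed.

Lemma key_num (R : realType) (s q : nat) (M cov : R) :
  (1 <= s)%N -> (1 <= q)%N -> (s.+1)%:R * q%:R <= M -> 0 <= cov <= 1 ->
  (1 - s%:R^-1) * q%:R / M * cov <= 1 - (1 - cov / M) ^+ q.
Proof.
move=> s1 q1 HM /andP[c0 c1].
have s0 : 1 <= s%:R :> R by rewrite ler1n.
have q0 : 1 <= q%:R :> R by rewrite ler1n.
have M1 : 1 <= M.
  apply: le_trans HM; rewrite -natrM ler1n muln_gt0 q1 //.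
have M0 : 0 < M by apply: lt_le_trans M1.
set y := cov / M.
have y0 : 0 <= y by rewrite divr_ge0 // ltW.
have y1 : y <= 1 by rewrite ler_pdivrMr // mul1r; apply: le_trans M1.
have qyM : q%:R * y * (s.+1)%:R <= cov.
  have h : (s.+1)%:R * q%:R / M <= 1 by rewrite ler_pdivrMr // mul1r.
  have -> : q%:R * y * (s.+1)%:R = cov * ((s.+1)%:R * q%:R / M) by rewrite /y; ring.
  set z := _ / M in h *; nra.
have := @bern2 _ y q; rewrite y0 y1 => /(_ isT).
have -> : (1 - s%:R^-1) * q%:R / M * cov = (1 - s%:R^-1) * q%:R * y by rewrite /y mulrA mulrAC.
move=> B.
have sinv : s%:R^-1 * s%:R = 1 :> R by rewrite mulVf // gt_eqF // (lt_le_trans ltr01 s0).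
have sS : (s.+1)%:R = s%:R + 1 :> R by rewrite -natr1.
rewrite sS in qyM.
set t := s%:R^-1 in sinv *.
set S := s%:R in sinv sS qyM s0 *.
set Q := q%:R in B qyM q0 *.
have t0 : 0 <= t by rewrite invr_ge0; apply: le_trans s0.
have Qy : Q * y * S <= 1 by nra.
have S0 : 0 < S by apply: lt_le_trans s0.
have Qyt : Q * y <= t.
  have -> : t = 1 / S by rewrite /t div1r.
  by rewrite ler_pdivlMr.
have Qy0 : 0 <= Q * y by rewrite mulr_ge0 // (le_trans ler01 q0).
have H2 : Q ^+ 2 * y ^+ 2 / 2%:R <= t * (Q * y).
  have -> : Q ^+ 2 * y ^+ 2 / 2%:R = (Q * y) * (Q * y) / 2%:R by rewrite !expr2; ring.
  nra.
have -> : (1 - t) * Q * y = Q * y - t * (Q * y) by ring.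
lra.
Qed.


Section Gen.
Variables (R : realType) (I : finType) (w v : I -> R) (k : nat).

Lemma vsetE (T : {set I}) : vset v T = \sum_x (x \in T)%:R * v x.
Proof.
rewrite /vset big_mkcond /=; apply: eq_bigr => x _.
by case: (x \in T); rewrite ?mul1r ?mul0r.
Qed.

Lemma sum_xnorm (x : {set I} -> R) : frac_solution w k x -> \sum_C x C = xnorm w k x.
Proof.
case=> _ x0; rewrite (bigID (is_config w k)) /= [X in _ + X]big1 ?addr0 //.

Qed.

Lemma sum_cover (x : {set I} -> R) i : frac_solution w k x ->
  \sum_C x C * (i \in C)%:R = Defs.cover w k x i.
Proof.
case=> _ x0; rewrite /cover (bigID (fun C => is_config w k C && (i \in C))) /=.
rewrite [X in _ + X]big1 ?addr0.
  by apply: eq_bigr => C /andP[_ ->]; rewrite mulr1.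
move=> C; case: (boolP (is_config w k C)) => [cC|/x0 ->]; last by rewrite mul0r.
by rewrite /= => /negbTE ->; rewrite mulr0.
Qed.

Lemma sum_notcover (x : {set I} -> R) i : frac_solution w k x ->
  \sum_C x C * (i \notin C)%:R = xnorm w k x - Defs.cover w k x i.
Proof.
move=> fx; rewrite -sum_xnorm // -sum_cover // -sumrB; apply: eq_bigr => C _.
by case: (i \in C); rewrite /= ?mulr0 ?mulr1 ?subr0 ?subrr.
Qed.

Lemma prod_notin (q : nat) (a : {ffun 'I_q -> {set I}}) i :
  \prod_b (i \notin a b)%:R = (i \notin \bigcup_b a b)%:R :> R.
Proof.
case: (boolP (i \in \bigcup_b a b)) => [/bigcupP[b _ ib]|nU] /=.
  by rewrite (bigD1 b) //= ib mul0r.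
rewrite big1 // => b _; case: (boolP (i \in a b)) => // ib.
by case/negP: nU; apply/bigcupP; exists b.
Qed.


Lemma step_gen (q : nat) (x : {set I} -> R) (S : {set I}) (M c : R) :
  LP_feasible w k S M x -> 0 < M -> (forall i, 0 <= v i) ->
  (forall cv, 0 <= cv <= 1 -> c * cv <= 1 - (1 - cv / M) ^+ q) ->
  c * vfrac w v k x <= \sum_(a : {ffun 'I_q -> {set I}})
     (\prod_b (x (a b) / xnorm w k x)) * vset v (S :&: \bigcup_b a b).
Proof.
case=> fx [cov [supp nx]] M0 v0 Hc.
have Pa : forall i, \sum_(a : {ffun 'I_q -> {set I}})
    (\prod_b (x (a b) / xnorm w k x)) * (i \notin \bigcup_b a b)%:R
    = (1 - Defs.cover w k x i / M) ^+ q.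
  move=> i; under eq_bigr do rewrite -prod_notin -big_split /=.
  rewrite -(bigA_distr_bigA (fun (b : 'I_q) (C : {set I}) => x C / xnorm w k x * (i \notin C)%:R)).
  rewrite /= prodr_const card_ord; congr (_ ^+ _).
  under eq_bigr do rewrite mulrAC.
  by rewrite -mulr_suml sum_notcover // nx mulrBl divff ?gt_eqF.
have Pa1 : \sum_(a : {ffun 'I_q -> {set I}}) (\prod_b (x (a b) / xnorm w k x)) = 1.
  rewrite -(bigA_distr_bigA (fun (b : 'I_q) (C : {set I}) => x C / xnorm w k x)).
  rewrite /= prodr_const -mulr_suml sum_xnorm // nx divff ?gt_eqF // expr1n.
  by [].
rewrite /vfrac /vvec mulr_sumr.
under [X in _ <= X]eq_bigr do rewrite vsetE mulr_sumr.
rewrite exchange_big /=; apply: ler_sum => y _.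
have -> : \sum_(a : {ffun 'I_q -> {set I}}) (\prod_b (x (a b) / xnorm w k x)) *
      ((y \in S :&: \bigcup_b a b)%:R * v y) =
    (y \in S)%:R * v y * (1 - (1 - Defs.cover w k x y / M) ^+ q).
  rewrite -Pa -[X in X - _]Pa1 -sumrB mulr_sumr; apply: eq_bigr => a _.
  rewrite inE; case: (y \in S); case: (y \in \bigcup_b a b); rewrite /=.
  1-4: by ring.
case: (boolP (y \in S)) => yS.
  rewrite mul1r mulrA [_ * v y]mulrC ler_wpM2l //; apply: Hc; exact: cov.
have -> : Defs.cover w k x y = 0.
  rewrite /Defs.cover big1 // => C /andP[_ yC]; apply: supp.
  by apply/negP => /subsetP/(_ y yC); apply/negP.
by rewrite !mul0r mulr0.
Qed.

Lemma sum_prod1 (q : nat) (x : {set I} -> R) : frac_solution w k x -> xnorm w k x != 0 ->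
  \sum_(a : {ffun 'I_q -> {set I}}) \prod_b (x (a b) / xnorm w k x) = 1.
Proof.
move=> fx nx0.
rewrite -(bigA_distr_bigA (fun (b : 'I_q) (C : {set I}) => x C / xnorm w k x)).
by rewrite /= prodr_const -mulr_suml sum_xnorm // divff // expr1n.
Qed.

End Gen.

Section Hist.
Variables (R : realType) (I : finType) (v : I -> R) (N q : nat).
Local Notation H := (history I N q).

Lemma Sj_dep (h h' : H) t : (forall i : 'I_N, (i < t)%N -> h i = h' i) ->
  Sj h t = Sj h' t.
Proof. by move=> E; rewrite /Sj; congr (~: _); apply: eq_bigr => i /E ->. Qed.

Lemma Sj_succ (h : H) (o : 'I_N) : Sj h o.+1 = Sj h o :\: \bigcup_b h o b.
Proof.
rewrite /Sj (bigD1 o) //= setCU setDE setIC; congr (_ :&: ~: _).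
by congr (~: _); apply: eq_bigl => i; rewrite ltnS ltn_neqAle andbC.
Qed.

Lemma Sj_mono (h : H) t x : x \notin Sj h t -> x \notin Sj h t.+1.
Proof.
rewrite /Sj !inE !negbK => /bigcupP[i it xi]; apply/bigcupP; exists i => //.
exact: ltnW.
Qed.

Lemma Sj0 (h : H) x : x \in Sj h 0.
Proof. by rewrite /Sj inE; apply/bigcupP => -[]. Qed.

Lemma tele (h : H) t : vset v (~: Sj h t) = \sum_(0 <= i < t) vset v (Sj h i :\: Sj h i.+1).
Proof.
elim: t => [|t IH].
  rewrite big_geq // vsetE big1 // => x _; by rewrite inE Sj0 mul0r.
rewrite big_nat_recr //= -IH !vsetE -big_split /=; apply: eq_bigr => x _.
rewrite -mulrDl; congr (_ * _).
have gen : forall (A B : {set I}), (x \notin A -> x \notin B) ->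
    (x \in ~: B)%:R = (x \in ~: A)%:R + (x \in A :\: B)%:R :> R.
  move=> A B AB; rewrite !inE; case: (boolP (x \in A)) => xA /=.
    by rewrite add0r andbT.
  by rewrite (negbTE (AB xA)) addr0.
by apply: gen; apply: Sj_mono.
Qed.

End Hist.
Lemma eps32 (R : realType) (s : nat) : (0 < s)%N ->
  ((s ^ 2)%:R^-1 : R) `^ (3%:R / 2%:R) = (s ^ 2)%:R^-1 / s%:R.
Proof.
move=> s0.
have e0 : 0 <= ((s ^ 2)%:R^-1 : R) by rewrite invr_ge0.
rewrite -(mulr_powRB1 e0); last by rewrite divr_gt0 // ltr0n.
have -> : 3%:R / 2%:R - 1 = 2^-1 :> R by field.
rewrite powR12_sqrt // natrX -exprVn sqrtr_sqr ger0_norm ?invr_ge0 //.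
Qed.


End Aux.
Import Aux.

Theorem lemma3p1 (R : realType) (I : finType) (w v : I -> R) (m k : nat)
  (eps : R) (s q : nat)
  (pol : nat -> history I (s ^ 2) q -> {set I} -> R) :
  (forall i, 0 <= w i <= 1) -> (forall i, 0 <= v i) ->
  (0 < m)%N -> (0 < k)%N ->
  0 < eps -> eps < 1 / 10%:R ->
  eps^-1 = (s ^ 2)%:R ->                          (* eps^{-1/2} = s is a natural number *)
  expR (expR (eps ^- 30)) < m%:R ->               (* eps-simple *)
  q%:R = eps * m%:R ->                            (* q = eps m is a natural number *)
  (* x^j is determined by the samples of iterations 1..j-1 *)
  (forall (j : nat) (h h' : history I (s ^ 2) q),
      (forall i : 'I_(s ^ 2), (i.+1 < j)%N -> h i = h' i) -> pol j h = pol j h') ->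
  (* x^j is a (1-eps)-approximate solution of LP(S_{j-1}, m_j) *)
  (forall (j : nat) (h : history I (s ^ 2) q), (1 <= j <= s ^ 2)%N ->
      approx_LP w v k eps (Sj h j.-1) (m%:R * (1 - (j.-1)%:R * eps)) (pol j h)) ->
  (eps - eps `^ (3%:R / 2%:R)) *
    \sum_(1 <= j < (s ^ 2 - s).+1)
      Exp w k pol (fun h => vfrac w v k (pol j h)) / (1 - (j.-1)%:R * eps)
  <= Exp w k pol (fun h => vset v (~: Sj h (s ^ 2))).
Proof.
move=> Hw Hv Hm Hk He0 He1 Hs _ Hq Hdep Happ.
have epsE : eps = (s ^ 2)%:R^-1 by rewrite -Hs invrK.
have N10 : (10 < s ^ 2)%N.
  rewrite -(ltr_nat R).
  have eN : eps * (s ^ 2)%:R = 1 by rewrite -Hs mulfV ?gt_eqF.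
  move: He1; rewrite div1r => He1.
  have t : 10%:R * eps < 1.
    by rewrite -ltr_pdivlMl ?ltr0n // mulr1.
  set X := (s ^ 2)%:R in eN *; set T := 10%:R in t *; nra.
have s1 : (1 <= s)%N.
  by rewrite lt0n; apply/eqP => s0; move: N10; rewrite s0.
have N0 : (0 < s ^ 2)%N by rewrite expn_gt0 s1.
have q1 : (1 <= q)%N.
  by rewrite -(ltr_nat R) Hq mulr_gt0 // ltr0n.
pose N := (s ^ 2)%N.
pose A := {ffun 'I_q -> {set I}}.
pose a0 : A := [ffun => set0].
pose p := fun (i : 'I_(s ^ 2)) (h : history I (s ^ 2) q) (a : A) =>
  \prod_b (pol i.+1 h (a b) / xnorm w k (pol i.+1 h)).
have eN : eps * (s ^ 2)%:R = 1 by rewrite -Hs mulfV ?gt_eqF.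
have pos_i : forall i : 'I_(s ^ 2), 0 < m%:R * (1 - i%:R * eps) :> R.
  move=> i; rewrite mulr_gt0 ?ltr0n // subr_gt0 epsE ltr_pdivrMr ?ltr0n //.
  by rewrite mul1r ltr_nat ltn_ord.
have LP : forall (i : 'I_(s ^ 2)) h,
    LP_feasible w k (Sj h i) (m%:R * (1 - i%:R * eps)) (pol i.+1 h).
  by move=> i h; case: (Happ i.+1 h (ltn_ord i)).
have xn : forall (i : 'I_(s ^ 2)) h, xnorm w k (pol i.+1 h) = m%:R * (1 - i%:R * eps).
  by move=> i h; case: (LP i h) => _ [_ []].
have p_dep : forall (i : 'I_(s ^ 2)) (h h' : history I (s ^ 2) q), (forall i' : 'I_(s ^ 2), (i' < i)%N -> h i' = h' i') ->
    p i h = p i h'.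
  by move=> i h h' E; rewrite /p (Hdep i.+1 h h') // => i'; rewrite ltnS; exact: E.
have p_sum1 : forall (i : 'I_(s ^ 2)) (h : history I (s ^ 2) q), \sum_a p i h a = 1.
  move=> i h; rewrite /p sum_prod1 //; first by case: (LP i h).
  by rewrite xn gt_eqF.
have Pl_ge0 : forall t (h : history I (s ^ 2) q), 0 <= Pl p t h.
  move=> t h; apply: prodr_ge0 => i _; apply: prodr_ge0 => b _.
  case: (LP i h) => [[x0 _] _]; apply: divr_ge0; first exact: x0.
  by rewrite xn; exact: ltW.
have ExpE : forall X, Exp w k pol X = \sum_h Pl p (s ^ 2) h * X h.
  move=> X; apply: eq_bigr => h _; congr (_ * _); rewrite /Pl /hist_prob.
  by apply: eq_bigl => i; rewrite ltn_ord.
have vset_ge0 : forall T, 0 <= vset v T by move=> T; apply: sumr_ge0 => x _.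
rewrite [X in _ <= X]ExpE.
under [X in _ <= X]eq_bigr do rewrite tele mulr_sumr.
rewrite exchange_big /= [X in _ <= X](big_cat_nat _ (n := (s ^ 2 - s)%N)) ?leq_subr //=.
rewrite -[X in X <= _]addr0; apply: lerD; last first.
  by apply: sumr_ge0 => i _; apply: sumr_ge0 => h _; rewrite mulr_ge0.
rewrite big_add1 /= mulr_sumr [X in X <= _]big_nat_cond [X in _ <= X]big_nat_cond.
apply: ler_sum => i /andP[/andP[_ iNs] _].
have iN : (i < s ^ 2)%N by apply: leq_trans iNs (leq_subr _ _).
have [o iEo] : exists o : 'I_(s ^ 2), i = o by exists (Ordinal iN).
rewrite iEo in iNs *.
set c := (eps - eps `^ (3%:R / 2%:R)) / (1 - o%:R * eps).
have -> : (eps - eps `^ (3%:R / 2%:R)) *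
   (Exp w k pol (fun h => vfrac w v k (pol o.+1 h)) / (1 - o%:R * eps)) =
   c * \sum_h Pl p (s ^ 2) h * vfrac w v k (pol o.+1 h).
  by rewrite ExpE /c mulrCA mulrC.
have updo : forall (h : history I (s ^ 2) q) a (i' : 'I_(s ^ 2)), (i' < o)%N ->
    upd h o a i' = h i'.
  by move=> h a i' io; apply: upd_neq; apply/eqP => E; move: io; rewrite E ltnn.
have dep2 : depl o.+1 (fun h => vfrac w v k (pol o.+1 h)).
  by move=> h h' E /=; rewrite (Hdep o.+1 h h') // => i' H; apply: E; exact: ltnW.
have dep1 : depl o.+1 (fun h : history I (s ^ 2) q => vset v (Sj h o :\: Sj h o.+1)).
  move=> h h' E /=; rewrite (Sj_dep E) (Sj_dep (t := o) (h := h) (h' := h')) //.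
  by move=> i' io; apply: E; apply: ltnW.
rewrite (marg1 a0 p_dep p_sum1 dep2) (marg1 a0 p_dep p_sum1 dep1) mulr_sumr.
apply: ler_sum => h _; rewrite mulrCA; apply: ler_wpM2l; first exact: Pl_ge0.
have -> : \sum_a p o h a * vfrac w v k (pol o.+1 (upd h o a)) = vfrac w v k (pol o.+1 h).
  have ph : forall a, pol o.+1 (upd h o a) = pol o.+1 h.
    by move=> a; apply: Hdep => i'; rewrite ltnS => /updo.
  under eq_bigr do rewrite ph.
  by rewrite -mulr_suml p_sum1 mul1r.
have Eset : forall a, Sj (upd h o a) o :\: Sj (upd h o a) o.+1 = Sj h o :&: \bigcup_b a b.
  move=> a; rewrite Sj_succ (Sj_dep (t := o) (h := upd h o a) (h' := h)); last exact: updo.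
  by rewrite upd_eq setDDr setDv set0U.
under eq_bigr do rewrite Eset.
apply: step_gen; [exact: LP| exact: pos_i | exact: Hv |].
move=> cv Hcv.
have s0 : s%:R != 0 :> R by rewrite pnatr_eq0 -lt0n.
have N0' : (s ^ 2)%:R != 0 :> R by rewrite pnatr_eq0 -lt0n.
have m0 : m%:R != 0 :> R by rewrite pnatr_eq0 -lt0n.
have d0 : 1 - o%:R * eps != 0.
  by have := pos_i o; rewrite pmulr_rgt0 ?ltr0n // => /gt_eqF ->.
have cE : c = (1 - s%:R^-1) * q%:R / (m%:R * (1 - o%:R * eps)).
  rewrite /c Hq epsE eps32 //; rewrite epsE in d0; field.
  by rewrite s0 m0 subr_eq0 -natrX eqr_nat gtn_eqF.
rewrite cE; apply: key_num => //.
rewrite ltn_subRL in iNs.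
have so : (o%:R + s%:R + 1 <= (s ^ 2)%:R :> R).
  have H : (o + s + 1 <= s ^ 2)%N by rewrite addn1 (addnC o).
  by move: H; rewrite -(ler_nat R) !natrD.
have m0' : 0 <= m%:R :> R by [].
have dd : 0 <= (s ^ 2)%:R - (o%:R + s%:R + 1) :> R by rewrite subr_ge0.
have hint := mulr_ge0 (mulr_ge0 m0' (ltW He0)) dd.
rewrite Hq -natr1.
have -> : m%:R * (1 - o%:R * eps) = m%:R * (eps * (s ^ 2)%:R - o%:R * eps) by rewrite eN.
set X := (s ^ 2)%:R in hint *; set M := m%:R in hint *.
set O := o%:R in hint *; set S := s%:R in hint *.
rewrite -subr_ge0.
have -> : M * (eps * X - O * eps) - (S + 1) * (eps * M) = M * eps * (X - (O + S + 1)) by ring.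
by [].
Qed.
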